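(* Let $n=2$, assume Assumptions A and B and $c_1^2+c_2^2>0$, and let $S$ be a solution of (IVP) on $[r_0,\infty)$ with $s_\infty=\lim_{r\to\infty}S(r)$. Then: (i) if $c_1\le0$ and $c_2\ge0$, then $s_\infty=1$; (ii) if $c_1\ge0$ and $c_2\le0$, then $s_\infty=0$; (iii) if $c_1,c_2<0$, then $s_\infty=s^*$; (iv) if $c_1,c_2>0$, then $s_\infty\in\{0,1,s^*\}$.
   Context: For $i=1,2$, $g_i(s)=a^{(i)}_0+a^{(i)}_1s^{\alpha^{(i)}_1}+\dots+a^{(i)}_{N_i}s^{\alpha^{(i)}_{N_i}}$ ($s\ge0$) with $N_i\ge0$, $a^{(i)}_0>0$, $a^{(i)}_j\ge0$, real $0<\alpha^{(i)}_1<\dots<\alpha^{(i)}_{N_i}$; $G_i(u)=g_i(|u|)u$ for $u\in\mathbb R$. Assumption A: $f_1,f_2\in C([0,1])\cap C^1((0,1))$, $f_1(0)=0$, $f_2(1)=0$, $f_1'>0$, $f_2'<0$ on $(0,1)$. Assumption B: $p_c'\in C^1((0,1))$, $p_c'>0$ on $(0,1)$. $F_i(S)=1/(p_c'(S)f_i(S))$. (IVP) with dimension $n$: $S'(r)=G_2(c_2r^{1-n})F_2(S)-G_1(c_1r^{1-n})F_1(S)$ for $r>r_0$, $S(r_0)=s_0\in(0,1)$, $0<S<1$. The limit $s_\infty$ exists for any solution on $[r_0,\infty)$. $f=f_1/f_2$ is a strictly increasing bijection $(0,1)\to(0,\infty)$; when $c_1c_2>0$, $s^*=f^{-1}\big(c_1a^{(1)}_0/(c_2a^{(2)}_0)\big)\in(0,1)$.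 *)

(* Defs.v *)
From Stdlib Require Import Reals Lra.
Open Scope R_scope.

Definition rpow (s alpha : R) : R := if Rle_dec s 0 then 0 else Rpower s alpha.

Fixpoint psum (f : nat -> R) (N : nat) : R :=
  match N with
  | O => 0
  | S k => psum f k + f (S k)
  end.

Definition gfun (N : nat) (a alpha : nat -> R) (s : R) : R :=
  a O + psum (fun j => a j * rpow s (alpha j)) N.

Definition g_admissible (N : nat) (a alpha : nat -> R) : Prop :=
  0 < a O /\
  (forall j, (1 <= j <= N)%nat -> 0 <= a j) /\
  (forall j, (1 <= j <= N)%nat -> 0 < alpha j) /\
  (forall j, (1 <= j < N)%nat -> alpha j < alpha (S j)).

Definition Gfun (N : nat) (a alpha : nat -> R) (u : R) : R :=
  gfun N a alpha (Rabs u) * u.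

Definition cont_on_01 (f : R -> R) : Prop :=
  forall x, 0 <= x <= 1 -> forall eps, 0 < eps ->
    exists delta, 0 < delta /\
      forall y, 0 <= y <= 1 -> Rabs (y - x) < delta -> Rabs (f y - f x) < eps.

Definition C1_on_open01_with (f df : R -> R) : Prop :=
  forall x, 0 < x < 1 -> derivable_pt_lim f x (df x) /\ continuity_pt df x.

Definition AssumptionA (f1 f2 : R -> R) : Prop :=
  cont_on_01 f1 /\ cont_on_01 f2 /\
  (exists df1 df2 : R -> R,
     C1_on_open01_with f1 df1 /\ C1_on_open01_with f2 df2 /\
     (forall x, 0 < x < 1 -> 0 < df1 x) /\
     (forall x, 0 < x < 1 -> df2 x < 0)) /\
  f1 0 = 0 /\ f2 1 = 0.

Definition AssumptionB (pc dpc : R -> R) : Prop :=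
  (forall x, 0 < x < 1 -> derivable_pt_lim pc x (dpc x)) /\
  (exists ddpc : R -> R, C1_on_open01_with dpc ddpc) /\
  (forall x, 0 < x < 1 -> 0 < dpc x).

Definition Ffun (dpc fi : R -> R) (s : R) : R := 1 / (dpc s * fi s).

Definition IVP_solution_n2
  (N1 N2 : nat) (a1 al1 a2 al2 : nat -> R) (f1 f2 dpc : R -> R)
  (c1 c2 r0 s0 : R) (S : R -> R) : Prop :=
  S r0 = s0 /\
  (forall r, r0 <= r -> 0 < S r < 1) /\
  (forall eps, 0 < eps -> exists delta, 0 < delta /\
     forall r, r0 <= r < r0 + delta -> Rabs (S r - s0) < eps) /\
  (forall r, r0 < r ->
     derivable_pt_lim S r
       (Gfun N2 a2 al2 (c2 * / r) * Ffun dpc f2 (S r)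
        - Gfun N1 a1 al1 (c1 * / r) * Ffun dpc f1 (S r))).

Definition lim_at_infty (S : R -> R) (l : R) : Prop :=
  forall eps, 0 < eps -> exists R0, forall r, R0 <= r -> Rabs (S r - l) < eps.

(* Main.v *)
Require Import Defs.
From Stdlib Require Import Reals Lra Lia.
Open Scope R_scope.

Definition ev (P : R -> Prop) := exists M, forall r, M <= r -> P r.
Definition tends (u : R -> R) (l : R) := forall eps, 0 < eps -> ev (fun r => Rabs (u r - l) < eps).

Lemma ev_and P Q : ev P -> ev Q -> ev (fun r => P r /\ Q r).
Proof. intros [M1 H1] [M2 H2]; exists (Rmax M1 M2); intros r Hr; split;
 [apply H1 | apply H2]; pose proof (Rmax_l M1 M2); pose proof (Rmax_r M1 M2); lra. Qed.

Lemma ev_ge M : ev (fun r => M <= r).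
Proof. exists M; auto. Qed.

Lemma ev_mono (P Q : R -> Prop) : (forall r, P r -> Q r) -> ev P -> ev Q.
Proof. intros H [M HM]; exists M; auto. Qed.

Lemma tends_const c : tends (fun _ => c) c.
Proof. intros e He; exists 0; intros; unfold Rminus; rewrite Rplus_opp_r, Rabs_R0; lra. Qed.

Lemma tends_minus u v l m : tends u l -> tends v m -> tends (fun r => u r - v r) (l - m).
Proof. intros Hu Hv e He.
 apply (ev_mono (fun r => Rabs (u r - l) < e/2 /\ Rabs (v r - m) < e/2)).
 - intros r [H1 H2]. replace (u r - v r - (l - m)) with ((u r - l) + - (v r - m)) by ring.
   eapply Rle_lt_trans; [apply Rabs_triang|]. rewrite Rabs_Ropp; lra.
 - apply ev_and; [apply Hu|apply Hv]; lra. Qed.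

Lemma tends_mult u v l m : tends u l -> tends v m -> tends (fun r => u r * v r) (l * m).
Proof. intros Hu Hv e He.
 set (d := Rmin 1 (e / (2 * (Rabs l + Rabs m + 1)))).
 assert (Hp : 0 < Rabs l + Rabs m + 1) by (pose proof (Rabs_pos l); pose proof (Rabs_pos m); lra).
 assert (Hd0 : 0 < d). { unfold d; apply Rmin_pos; [lra|]. apply Rdiv_lt_0_compat; lra. }
 assert (Hd1 : d <= 1) by apply Rmin_l.
 assert (Hd2 : d * (Rabs l + Rabs m + 1) <= e / 2).
 { assert (d <= e / (2 * (Rabs l + Rabs m + 1))) by apply Rmin_r.
   apply Rmult_le_compat_r with (r := Rabs l + Rabs m + 1) in H; [|lra].
   replace (e / (2 * (Rabs l + Rabs m + 1)) * (Rabs l + Rabs m + 1)) with (e/2) in H by (field; lra). lra. }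
 apply (ev_mono (fun r => Rabs (u r - l) < d /\ Rabs (v r - m) < d)).
 - intros r [H1 H2]. replace (u r * v r - l * m) with ((u r - l) * (v r - m) + l * (v r - m) + m * (u r - l)) by ring.
   eapply Rle_lt_trans; [apply Rabs_triang|].
   eapply Rle_lt_trans; [apply Rplus_le_compat_r; apply Rabs_triang|].
   rewrite !Rabs_mult.
   pose proof (Rabs_pos l); pose proof (Rabs_pos m); pose proof (Rabs_pos (u r - l)); pose proof (Rabs_pos (v r - m)).
   assert (Rabs (u r - l) * Rabs (v r - m) <= d * d) by (apply Rmult_le_compat; lra).
   assert (Rabs l * Rabs (v r - m) <= Rabs l * d) by (apply Rmult_le_compat_l; lra).
   assert (Rabs m * Rabs (u r - l) <= Rabs m * d) by (apply Rmult_le_compat_l; lra).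
   assert (d * d <= d * 1) by (apply Rmult_le_compat_l; lra). nra.
 - apply ev_and; [apply Hu|apply Hv]; lra. Qed.

Lemma tends_pos u l : tends u l -> 0 < l -> ev (fun r => l / 2 < u r).
Proof. intros H Hl. apply (ev_mono (fun r => Rabs (u r - l) < l/2)).
 - intros r Hr. apply Rabs_def2 in Hr. lra.
 - apply H; lra. Qed.

Lemma tends_neg u l : tends u l -> l < 0 -> ev (fun r => u r < l / 2).
Proof. intros H Hl. apply (ev_mono (fun r => Rabs (u r - l) < - l/2)).
 - intros r Hr. apply Rabs_def2 in Hr. lra.
 - apply H; lra. Qed.

Lemma ev_exists P : ev P -> forall x, exists r, x <= r /\ P r.
Proof. intros [M HM] x. exists (Rmax M x). split; [apply Rmax_r|apply HM, Rmax_l]. Qed.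

Lemma L_mono S D R : (forall r, R <= r -> derivable_pt_lim S r (D r)) ->
  (forall r, R <= r -> 0 <= D r) -> forall x y, R <= x -> x <= y -> S x <= S y.
Proof. intros Hd Hp x y Hx Hxy. destruct (Req_dec x y) as [->|Hne]; [lra|].
 destruct (MVT_cor2 S D x y) as [c [Hc Hc2]]; [lra| intros; apply Hd; lra|].
 assert (0 <= D c) by (apply Hp; lra). assert (0 <= D c * (y - x)) by (apply Rmult_le_pos; lra). lra. Qed.

Lemma L_pos_lim S D R s : (forall r, R <= r -> derivable_pt_lim S r (D r)) ->
  (forall r, R <= r -> 0 <= D r) -> tends S s -> forall x, R <= x -> S x <= s.
Proof. intros Hd Hp Ht x Hx. destruct (Rle_dec (S x) s) as [|Hn]; auto. exfalso.
 destruct (ev_exists _ (Ht (S x - s) ltac:(lra)) x) as [r [Hr Hr2]].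
 assert (S x <= S r) by (eapply L_mono; eauto).
 apply Rabs_def2 in Hr2. lra. Qed.

Lemma L_div S D R k : 0 < R -> 0 < k -> (forall r, R <= r -> derivable_pt_lim S r (D r)) ->
  (forall r, R <= r -> k / r <= D r) -> (forall r, R <= r -> 0 < S r < 1) -> False.
Proof. intros HR Hk Hd Hb HS.
 set (y := R * exp (2 / k)).
 assert (Hy : R < y). { unfold y. assert (1 < exp (2/k)).
   { rewrite <- exp_0. apply exp_increasing. apply Rdiv_lt_0_compat; lra. } nra. }
 destruct (MVT_cor2 (fun r => S r - k * ln r) (fun r => D r - k * / r) R y) as [c [Hc Hc2]]; [lra| |].
 - intros c Hc. apply derivable_pt_lim_minus; [apply Hd; lra|].
   replace (k * / c) with (0 * ln c + k * / c) by ring.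
   apply (derivable_pt_lim_mult (fct_cte k) ln); [apply derivable_pt_lim_const|apply derivable_pt_lim_ln; lra].
 - assert (k / c <= D c) by (apply Hb; lra). unfold Rdiv in *.
   assert (0 <= (D c - k * / c) * (y - R)) by (apply Rmult_le_pos; lra).
   assert (ln y = ln R + 2 / k). { unfold y. rewrite ln_mult; [|lra|apply exp_pos]. rewrite ln_exp. unfold Rdiv; ring. }
   rewrite H1 in Hc. unfold Rdiv in Hc.
   replace (k * (ln R + 2 * / k)) with (k * ln R + 2) in Hc by (field; lra).
   pose proof (HS y ltac:(lra)); pose proof (HS R ltac:(lra)). lra. Qed.

Lemma derivable_one_minus S r d : derivable_pt_lim S r d -> derivable_pt_lim (fun x => 1 - S x) r (- d).
Proof. intros H. replace (- d) with (0 - d) by ring.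
 apply (derivable_pt_lim_minus (fct_cte 1) S); [apply derivable_pt_lim_const|auto]. Qed.

Lemma rpow_nonneg u al : 0 <= rpow u al.
Proof. unfold rpow. destruct (Rle_dec u 0); [lra|]. unfold Rpower. left; apply exp_pos. Qed.

Lemma rpow_small al : 0 < al -> forall e, 0 < e -> exists d, 0 < d /\ forall u, u < d -> rpow u al < e.
Proof. intros Hal e He. exists (Rpower e (/ al)). split; [unfold Rpower; apply exp_pos|].
 intros u Hu. unfold rpow. destruct (Rle_dec u 0); [lra|].
 apply Rlt_le_trans with (Rpower (Rpower e (/ al)) al).
 - apply Rlt_Rpower_l; lra.
 - right. rewrite Rpower_mult. replace (/ al * al) with 1 by (field; lra). apply Rpower_1; auto. Qed.

Lemma psum_small (a al : nat -> R) k : (forall j, (1 <= j <= k)%nat -> 0 < al j) ->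
  forall e, 0 < e -> exists d, 0 < d /\ forall u, u < d ->
   Rabs (psum (fun j => a j * rpow u (al j)) k) < e.
Proof. induction k as [|k IH]; intros Hal e He.
 - exists 1; split; [lra|]. intros; simpl; rewrite Rabs_R0; auto.
 - destruct (IH (fun j Hj => Hal j ltac:(lia)) (e/2) ltac:(lra)) as [d1 [Hd1 H1]].
   destruct (rpow_small (al (S k)) (Hal (S k) ltac:(lia)) (e / 2 / (Rabs (a (S k)) + 1)))
     as [d2 [Hd2 H2]].
   { apply Rdiv_lt_0_compat; [lra|]. pose proof (Rabs_pos (a (S k))); lra. }
   exists (Rmin d1 d2). split; [apply Rmin_pos; auto|]. intros u Hu.
   pose proof (Rmin_l d1 d2); pose proof (Rmin_r d1 d2).
   simpl. eapply Rle_lt_trans; [apply Rabs_triang|].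
   assert (Ha := H1 u ltac:(lra)). assert (Hb := H2 u ltac:(lra)).
   rewrite Rabs_mult. rewrite (Rabs_pos_eq (rpow u (al (S k)))) by apply rpow_nonneg.
   pose proof (Rabs_pos (a (S k))). pose proof (rpow_nonneg u (al (S k))).
   assert (Rabs (a (S k)) * rpow u (al (S k)) <= (Rabs (a (S k)) + 1) * rpow u (al (S k))) by nra.
   assert (Hq : (Rabs (a (S k)) + 1) * rpow u (al (S k)) < (Rabs (a (S k)) + 1) * (e / 2 / (Rabs (a (S k)) + 1))).
   { apply Rmult_lt_compat_l; lra. }
   replace ((Rabs (a (S k)) + 1) * (e / 2 / (Rabs (a (S k)) + 1))) with (e/2) in Hq by (field; lra).
   lra. Qed.

Lemma g_tends N a al c : g_admissible N a al ->
  tends (fun r => gfun N a al (Rabs (c * / r))) (a O).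
Proof. intros [_ [_ [Hal _]]] e He.
 destruct (psum_small a al N Hal e He) as [d [Hd H]].
 exists (Rabs c / d + 1). intros r Hr.
 assert (0 <= Rabs c / d) by (apply Rmult_le_pos; [apply Rabs_pos| left; apply Rinv_0_lt_compat; auto]).
 assert (Hr0 : 0 < r) by lra.
 unfold gfun. replace (a 0%nat + psum (fun j => a j * rpow (Rabs (c * / r)) (al j)) N - a 0%nat)
   with (psum (fun j => a j * rpow (Rabs (c * / r)) (al j)) N) by ring.
 apply H. rewrite Rabs_mult, Rabs_inv, (Rabs_pos_eq r) by lra.
 apply (Rmult_lt_reg_r r); [lra|]. rewrite Rmult_assoc, Rinv_l by lra.
 assert (Rabs c < d * (Rabs c / d + 1)). { unfold Rdiv. field_simplify; [|lra]. lra. }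
 assert (d * (Rabs c / d + 1) <= d * r) by (apply Rmult_le_compat_l; lra). lra. Qed.

Lemma cont_pt_eps f x : continuity_pt f x -> forall e, 0 < e -> exists d, 0 < d /\
  forall y, Rabs (y - x) < d -> Rabs (f y - f x) < e.
Proof. intros H e He. unfold continuity_pt, continue_in, limit1_in, limit_in in H.
 destruct (H e He) as [d [Hd H']]. exists d; split; auto. intros y Hy.
 destruct (Req_dec y x) as [->|Hne].
 - unfold Rminus; rewrite Rplus_opp_r, Rabs_R0; auto.
 - apply (H' y). split; [split; [exact I|auto]|]. simpl. unfold R_dist. auto. Qed.

Lemma tends_comp_cont f S s : continuity_pt f s -> tends S s -> tends (fun r => f (S r)) (f s).
Proof. intros Hc Ht e He. destruct (cont_pt_eps f s Hc e He) as [d [Hd H]].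
 apply (ev_mono _ _ (fun r Hr => H (S r) Hr)). apply Ht; auto. Qed.

Lemma tends_comp01 f S s : cont_on_01 f -> 0 <= s <= 1 -> tends S s -> ev (fun r => 0 <= S r <= 1) ->
  tends (fun r => f (S r)) (f s).
Proof. intros Hc Hs Ht Hev e He. destruct (Hc s Hs e He) as [d [Hd H]].
 apply (ev_mono (fun r => 0 <= S r <= 1 /\ Rabs (S r - s) < d)).
 - intros r [H1 H2]; apply H; auto.
 - apply ev_and; auto. Qed.

Lemma incr_of_deriv f df : (forall x, 0 < x < 1 -> derivable_pt_lim f x (df x)) ->
  (forall x, 0 < x < 1 -> 0 < df x) -> forall x y, 0 < x -> x < y -> y < 1 -> f x < f y.
Proof. intros Hd Hp x y Hx Hxy Hy.
 destruct (MVT_cor2 f df x y Hxy) as [c [Hc Hc2]]; [intros; apply Hd; lra|].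
 assert (0 < df c) by (apply Hp; lra). assert (0 < df c * (y - x)) by (apply Rmult_lt_0_compat; lra). lra. Qed.

Lemma left_end f : (forall x y, 0 < x -> x < y -> y < 1 -> f x < f y) -> cont_on_01 f ->
  forall x, 0 < x < 1 -> f 0 <= f x.
Proof. intros Hi Hc x Hx. destruct (Rle_dec (f 0) (f x)) as [|Hn]; auto. exfalso.
 destruct (Hc 0 ltac:(lra) (f 0 - f x) ltac:(lra)) as [d [Hd H]].
 set (y := Rmin (d/2) (x/2)).
 assert (0 < y) by (apply Rmin_pos; lra). assert (y <= d/2) by apply Rmin_l. assert (y <= x/2) by apply Rmin_r.
 assert (Hy2 := H y ltac:(lra) ltac:(rewrite Rminus_0_r, Rabs_pos_eq; lra)).
 apply Rabs_def2 in Hy2. assert (f y < f x) by (apply Hi; lra). lra. Qed.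

Lemma right_end f : (forall x y, 0 < x -> x < y -> y < 1 -> f x < f y) -> cont_on_01 f ->
  forall x, 0 < x < 1 -> f x <= f 1.
Proof. intros Hi Hc x Hx. destruct (Rle_dec (f x) (f 1)) as [|Hn]; auto. exfalso.
 destruct (Hc 1 ltac:(lra) (f x - f 1) ltac:(lra)) as [d [Hd H]].
 set (y := 1 - Rmin (d/2) ((1 - x)/2)).
 assert (0 < Rmin (d/2) ((1-x)/2)) by (apply Rmin_pos; lra).
 assert (Rmin (d/2) ((1-x)/2) <= d/2) by apply Rmin_l. assert (Rmin (d/2) ((1-x)/2) <= (1-x)/2) by apply Rmin_r.
 assert (Hy2 := H y ltac:(unfold y; lra) ltac:(unfold y; rewrite Rabs_left; lra)).
 apply Rabs_def2 in Hy2. assert (f x < f y) by (apply Hi; unfold y; lra). lra. Qed.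

Lemma cont_opp f : cont_on_01 f -> cont_on_01 (fun x => - f x).
Proof. intros H x Hx e He. destruct (H x Hx e He) as [d [Hd H']]. exists d; split; auto.
 intros y Hy Hyx. replace (- f y - - f x) with (- (f y - f x)) by ring. rewrite Rabs_Ropp; auto. Qed.

Lemma core_pos S D P Q R k B : 0 < R -> 0 < k -> 0 < B ->
  (forall r, R <= r -> derivable_pt_lim S r (D r)) ->
  (forall r, R <= r -> D r = P r / (r * Q r)) ->
  (forall r, R <= r -> 0 < Q r <= B) -> (forall r, R <= r -> k <= P r) ->
  (forall r, R <= r -> 0 < S r < 1) -> False.
Proof. intros HR Hk HB Hd HD HQ HP HS.
 apply (L_div S D R (k / B) HR ltac:(apply Rdiv_lt_0_compat; lra) Hd); auto.
 intros r Hr. rewrite HD by auto. destruct (HQ r Hr) as [Q1 Q2]. pose proof (HP r Hr).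
 replace (k / B / r) with (k * / (r * B)) by (field; lra).
 unfold Rdiv. apply Rmult_le_compat; try lra.
 - left; apply Rinv_0_lt_compat; nra.
 - apply Rinv_le_contravar; [nra|]. apply Rmult_le_compat_l; lra. Qed.

Lemma core_neg S D P Q R k B : 0 < R -> 0 < k -> 0 < B ->
  (forall r, R <= r -> derivable_pt_lim S r (D r)) ->
  (forall r, R <= r -> D r = P r / (r * Q r)) ->
  (forall r, R <= r -> 0 < Q r <= B) -> (forall r, R <= r -> P r <= - k) ->
  (forall r, R <= r -> 0 < S r < 1) -> False.
Proof. intros HR Hk HB Hd HD HQ HP HS.
 apply (core_pos (fun r => 1 - S r) (fun r => - D r) (fun r => - P r) Q R k B); auto.
 - intros; apply derivable_one_minus; auto.
 - intros r Hr. rewrite HD by auto. destruct (HQ r Hr). field. split; lra.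
 - intros r Hr; pose proof (HP r Hr); lra.
 - intros r Hr; pose proof (HS r Hr); lra. Qed.

Lemma L_neg_lim S D R s : (forall r, R <= r -> derivable_pt_lim S r (D r)) ->
  (forall r, R <= r -> D r <= 0) -> tends S s -> forall x, R <= x -> s <= S x.
Proof. intros Hd Hp Ht x Hx.
 assert (1 - S x <= 1 - s); [|lra].
 apply (L_pos_lim (fun r => 1 - S r) (fun r => - D r) R (1 - s)); auto.
 - intros; apply derivable_one_minus; auto.
 - intros r Hr; pose proof (Hp r Hr); lra.
 - exact (tends_minus _ _ _ _ (tends_const 1) Ht). Qed.

Lemma tends_band u l : tends u l -> forall e, 0 < e -> ev (fun r => l - e < u r < l + e).
Proof. intros H e He. apply (ev_mono (fun r => Rabs (u r - l) < e)); [|apply H; auto]. intros r Hr; apply Rabs_def2 in Hr; lra. Qed.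

Theorem theorem2p5
  (N1 N2 : nat) (a1 al1 a2 al2 : nat -> R)
  (f1 f2 pc dpc : R -> R)
  (c1 c2 r0 s0 : R) (S : R -> R) (s_inf : R) :
  g_admissible N1 a1 al1 ->
  g_admissible N2 a2 al2 ->
  AssumptionA f1 f2 ->
  AssumptionB pc dpc ->
  c1 ^ 2 + c2 ^ 2 > 0 ->
  0 < r0 ->
  0 < s0 < 1 ->
  IVP_solution_n2 N1 N2 a1 al1 a2 al2 f1 f2 dpc c1 c2 r0 s0 S ->
  lim_at_infty S s_inf ->
  ((c1 <= 0 /\ c2 >= 0) -> s_inf = 1) /\
  ((c1 >= 0 /\ c2 <= 0) -> s_inf = 0) /\
  ((c1 < 0 /\ c2 < 0) ->
     forall sstar, 0 < sstar < 1 ->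
       f1 sstar / f2 sstar = c1 * a1 O / (c2 * a2 O) -> s_inf = sstar) /\
  ((c1 > 0 /\ c2 > 0) ->
     forall sstar, 0 < sstar < 1 ->
       f1 sstar / f2 sstar = c1 * a1 O / (c2 * a2 O) ->
       s_inf = 0 \/ s_inf = 1 \/ s_inf = sstar).
Proof.
 intros Hg1 Hg2 [Hc1 [Hc2 [[df1 [df2 [Hd1 [Hd2 [Hp1 Hp2]]]]] [Hf10 Hf21]]]]
   [Hpc [[ddpc Hdd] Hdpos]] Hc Hr0 Hs0 [HS0 [HSb [_ HSd]]] Hlim.
 set (s := s_inf).
 assert (Ht : tends S s) by exact Hlim.
 assert (Ha1 : 0 < a1 O) by apply Hg1. assert (Ha2 : 0 < a2 O) by apply Hg2.
 assert (Hi1 : forall x y, 0 < x -> x < y -> y < 1 -> f1 x < f1 y)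
   by exact (incr_of_deriv f1 df1 (fun x h => proj1 (Hd1 x h)) Hp1).
 assert (Hi2 : forall x y, 0 < x -> x < y -> y < 1 -> - f2 x < - f2 y).
 { apply (incr_of_deriv (fun x => - f2 x) (fun x => - df2 x)).
   - intros x h. apply (derivable_pt_lim_opp f2). apply Hd2; auto.
   - intros x h; pose proof (Hp2 x h); lra. }
 assert (Hc2' := cont_opp f2 Hc2).
 assert (Hf1p : forall x, 0 < x < 1 -> 0 < f1 x).
 { intros x Hx. pose proof (left_end f1 Hi1 Hc1 (x/2) ltac:(lra)). pose proof (Hi1 (x/2) x ltac:(lra) ltac:(lra) ltac:(lra)). lra. }
 assert (Hf2p : forall x, 0 < x < 1 -> 0 < f2 x).
 { intros x Hx. pose proof (right_end _ Hi2 Hc2' ((1+x)/2) ltac:(lra)). pose proof (Hi2 x ((1+x)/2) ltac:(lra) ltac:(lra) ltac:(lra)). simpl in *. lra. }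
 assert (Hf20 : 0 < f2 0).
 { pose proof (left_end _ Hi2 Hc2' (1/2) ltac:(lra)). pose proof (Hf2p (1/2) ltac:(lra)). simpl in *; lra. }
 assert (Hf11 : 0 < f1 1).
 { pose proof (right_end _ Hi1 Hc1 (1/2) ltac:(lra)). pose proof (Hf1p (1/2) ltac:(lra)). lra. }
 assert (Hs01 : 0 <= s <= 1).
 { split; apply Rnot_lt_le; intro Hn.
   - destruct (ev_exists _ (Ht (- s) ltac:(lra)) r0) as [r [Hr Hr2]]. apply Rabs_def2 in Hr2.
     pose proof (HSb r Hr). lra.
   - destruct (ev_exists _ (Ht (s - 1) ltac:(lra)) r0) as [r [Hr Hr2]]. apply Rabs_def2 in Hr2.
     pose proof (HSb r Hr). lra. }
 pose (g1r := fun r => gfun N1 a1 al1 (Rabs (c1 * / r))).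
 pose (g2r := fun r => gfun N2 a2 al2 (Rabs (c2 * / r))).
 pose (P := fun r => c2 * g2r r * f1 (S r) - c1 * g1r r * f2 (S r)).
 pose (Q := fun r => dpc (S r) * f1 (S r) * f2 (S r)).
 pose (D := fun r => Gfun N2 a2 al2 (c2 * / r) * Ffun dpc f2 (S r) - Gfun N1 a1 al1 (c1 * / r) * Ffun dpc f1 (S r)).
 assert (HDd : forall r, r0 < r -> derivable_pt_lim S r (D r)) by exact HSd.
 assert (HQp : forall r, r0 < r -> 0 < Q r).
 { intros r Hr. pose proof (HSb r ltac:(lra)). unfold Q.
   pose proof (Hdpos _ H); pose proof (Hf1p _ H); pose proof (Hf2p _ H).
   apply Rmult_lt_0_compat; [apply Rmult_lt_0_compat|]; auto. }
 assert (HDf : forall r, r0 < r -> D r = P r / (r * Q r)).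
 { intros r Hr. pose proof (HSb r ltac:(lra)).
   pose proof (Hdpos _ H); pose proof (Hf1p _ H); pose proof (Hf2p _ H).
   unfold D, P, Q, Gfun, Ffun, g1r, g2r. rewrite !Rabs_mult.
   field. repeat split; lra. }
 set (pi := c2 * a2 O * f1 s - c1 * a1 O * f2 s).
 assert (HevS : ev (fun r => 0 <= S r <= 1)).
 { apply (ev_mono (fun r => r0 <= r)); [|apply ev_ge]. intros r Hr; pose proof (HSb r Hr); lra. }
 assert (HtP : tends P pi).
 { exact (tends_minus _ _ _ _
     (tends_mult _ _ _ _ (tends_mult _ _ _ _ (tends_const c2) (g_tends N2 a2 al2 c2 Hg2)) (tends_comp01 f1 S s Hc1 Hs01 Ht HevS))
     (tends_mult _ _ _ _ (tends_mult _ _ _ _ (tends_const c1) (g_tends N1 a1 al1 c1 Hg1)) (tends_comp01 f2 S s Hc2 Hs01 Ht HevS))). }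

 assert (Hpos : ev (fun r => 0 < P r) -> 0 < s).
 { intros [M HM]. set (R0 := Rmax M (r0 + 1)).
   pose proof (Rmax_l M (r0+1)); pose proof (Rmax_r M (r0+1)).
   assert (S R0 <= s).
   { apply (L_pos_lim S D R0 s); auto; [intros; apply HDd; unfold R0 in *; lra| |unfold R0; lra].
     intros r Hr. rewrite HDf by (unfold R0 in *; lra). left. apply Rdiv_lt_0_compat.
     - apply HM; unfold R0 in *; lra.
     - apply Rmult_lt_0_compat; [unfold R0 in *; lra| apply HQp; unfold R0 in *; lra]. }
   pose proof (HSb R0 ltac:(unfold R0 in *; lra)). lra. }
 assert (Hneg : ev (fun r => P r < 0) -> s < 1).
 { intros [M HM]. set (R0 := Rmax M (r0 + 1)).
   pose proof (Rmax_l M (r0+1)); pose proof (Rmax_r M (r0+1)).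
   assert (s <= S R0).
   { apply (L_neg_lim S D R0 s); auto; [intros; apply HDd; unfold R0 in *; lra| |unfold R0; lra].
     intros r Hr. rewrite HDf by (unfold R0 in *; lra).
     assert (0 < r * Q r) by (apply Rmult_lt_0_compat; [unfold R0 in *; lra| apply HQp; unfold R0 in *; lra]).
     assert (P r < 0) by (apply HM; unfold R0 in *; lra).
     unfold Rdiv. assert (0 < / (r * Q r)) by (apply Rinv_0_lt_compat; auto). nra. }
   pose proof (HSb R0 ltac:(unfold R0 in *; lra)). lra. }
 assert (Hint : 0 < s < 1 -> pi = 0).
 { intros Hs.
   assert (Hcd : continuity_pt dpc s) by exact (derivable_continuous_pt dpc s (exist _ (ddpc s) (proj1 (Hdd s Hs)))).
   assert (Hb1 : ev (fun r => dpc (S r) < dpc s + 1)).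
   { apply (ev_mono (fun r => dpc s - 1 < dpc (S r) < dpc s + 1)); [intros r Hr; lra|].
     exact (tends_band _ _ (tends_comp_cont dpc S s Hcd Ht) 1 ltac:(lra)). }
   assert (Hb2 : ev (fun r => f1 (S r) < f1 s + 1)).
   { apply (ev_mono (fun r => f1 s - 1 < f1 (S r) < f1 s + 1)); [intros r Hr; lra|].
     exact (tends_band _ _ (tends_comp01 f1 S s Hc1 Hs01 Ht HevS) 1 ltac:(lra)). }
   assert (Hb3 : ev (fun r => f2 (S r) < f2 s + 1)).
   { apply (ev_mono (fun r => f2 s - 1 < f2 (S r) < f2 s + 1)); [intros r Hr; lra|].
     exact (tends_band _ _ (tends_comp01 f2 S s Hc2 Hs01 Ht HevS) 1 ltac:(lra)). }
   pose proof (Hdpos s Hs); pose proof (Hf1p s Hs); pose proof (Hf2p s Hs).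
   set (B := (dpc s + 1) * (f1 s + 1) * (f2 s + 1)).
   assert (HB : 0 < B) by (unfold B; repeat apply Rmult_lt_0_compat; lra).
   assert (HQb : ev (fun r => r0 + 1 <= r -> 0 < Q r <= B)).
   { refine (ev_mono _ _ _ (ev_and _ _ Hb1 (ev_and _ _ Hb2 Hb3))). intros r [h1 [h2 h3]] Hr.
     pose proof (HSb r ltac:(lra)) as HSr.
     pose proof (Hdpos _ HSr); pose proof (Hf1p _ HSr); pose proof (Hf2p _ HSr).
     split; [apply HQp; lra|]. unfold Q, B.
     apply Rmult_le_compat; try lra; [apply Rmult_le_pos; lra|].
     apply Rmult_le_compat; lra. }
   destruct (Rtotal_order pi 0) as [Hlt|[Heq|Hgt]]; auto; exfalso.
   - destruct (ev_and _ _ HQb (tends_neg _ _ HtP Hlt)) as [M HM].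
     set (R0 := Rmax M (r0 + 1)).
     pose proof (Rmax_l M (r0+1)); pose proof (Rmax_r M (r0+1)).
     apply (core_neg S D P Q R0 (- (pi / 2)) B); try (unfold R0 in *; lra).
     + intros; apply HDd; unfold R0 in *; lra.
     + intros; apply HDf; unfold R0 in *; lra.
     + intros r Hr; apply (proj1 (HM r ltac:(unfold R0 in *; lra))); unfold R0 in *; lra.
     + intros r Hr; pose proof (proj2 (HM r ltac:(unfold R0 in *; lra))); lra.
     + intros r Hr; apply HSb; unfold R0 in *; lra.
   - destruct (ev_and _ _ HQb (tends_pos _ _ HtP Hgt)) as [M HM].
     set (R0 := Rmax M (r0 + 1)).
     pose proof (Rmax_l M (r0+1)); pose proof (Rmax_r M (r0+1)).
     apply (core_pos S D P Q R0 (pi / 2) B); try (unfold R0 in *; lra).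
     + intros; apply HDd; unfold R0 in *; lra.
     + intros; apply HDf; unfold R0 in *; lra.
     + intros r Hr; apply (proj1 (HM r ltac:(unfold R0 in *; lra))); unfold R0 in *; lra.
     + intros r Hr; pose proof (proj2 (HM r ltac:(unfold R0 in *; lra))); lra.
     + intros r Hr; apply HSb; unfold R0 in *; lra. }

 assert (Hpip : 0 < pi -> s = 1).
 { intros Hp. assert (0 < s).
   { apply Hpos. refine (ev_mono _ _ _ (tends_pos _ _ HtP Hp)). intros r Hr; simpl in Hr; lra. }
   destruct (Rtotal_order s 1) as [Hl|[He|Hg]]; auto; [|lra].
   pose proof (Hint ltac:(lra)). lra. }
 assert (Hpin : pi < 0 -> s = 0).
 { intros Hp. assert (s < 1).
   { apply Hneg. refine (ev_mono _ _ _ (tends_neg _ _ HtP Hp)). intros r Hr; simpl in Hr; lra. }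
   destruct (Rtotal_order s 0) as [Hl|[He|Hg]]; auto; [lra|].
   pose proof (Hint ltac:(lra)). lra. }
 assert (Hgev : ev (fun r => 0 < g1r r /\ 0 < g2r r /\ 0 < f1 (S r) /\ 0 < f2 (S r))).
 { refine (ev_mono _ _ _ (ev_and _ _ (tends_pos _ _ (g_tends N1 a1 al1 c1 Hg1) Ha1)
     (ev_and _ _ (tends_pos _ _ (g_tends N2 a2 al2 c2 Hg2) Ha2) (ev_ge r0)))).
   intros r [h1 [h2 h3]]. pose proof (HSb r h3) as HSr. unfold g1r, g2r.
   repeat split; [lra|lra|apply Hf1p; auto|apply Hf2p; auto]. }
 assert (Hlt : forall x y, 0 < x -> x < y -> y < 1 -> f1 x / f2 x < f1 y / f2 y).
 { intros x y Hx Hxy Hy. pose proof (Hi1 x y Hx Hxy Hy); pose proof (Hi2 x y Hx Hxy Hy).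
   pose proof (Hf1p x ltac:(lra)); pose proof (Hf2p x ltac:(lra)); pose proof (Hf1p y ltac:(lra)); pose proof (Hf2p y ltac:(lra)).
   unfold Rdiv. apply Rlt_le_trans with (f1 y * / f2 x).
   - apply Rmult_lt_compat_r; auto. apply Rinv_0_lt_compat; auto.
   - apply Rmult_le_compat_l; [lra|]. apply Rinv_le_contravar; lra. }
 assert (Hratio : c2 <> 0 -> 0 < s < 1 -> pi = 0 -> forall sstar, 0 < sstar < 1 ->
       f1 sstar / f2 sstar = c1 * a1 O / (c2 * a2 O) -> s = sstar).
 { intros Hc2n Hs Hpi sstar Hss Hrat.
   pose proof (Hf2p s Hs).
   assert (Hr2 : f1 s / f2 s = c1 * a1 O / (c2 * a2 O)).
   { unfold pi in Hpi. field_simplify_eq; [|split; lra]. lra. }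
   destruct (Rtotal_order s sstar) as [h|[h|h]]; auto.
   - pose proof (Hlt s sstar ltac:(lra) h ltac:(lra)). lra.
   - pose proof (Hlt sstar s ltac:(lra) h ltac:(lra)). lra. }
 split; [|split; [|split]].
 - intros [h1 h2].
   assert (0 < s).
   { apply Hpos. refine (ev_mono _ _ _ Hgev). intros r [k1 [k2 [k3 k4]]]. unfold P.
     destruct (Rle_lt_or_eq_dec c1 0 h1) as [h1'|h1'].
     + assert (0 <= c2 * g2r r * f1 (S r)) by (apply Rmult_le_pos; [apply Rmult_le_pos|]; lra).
       assert (0 < - c1 * g1r r * f2 (S r)) by (apply Rmult_lt_0_compat; [apply Rmult_lt_0_compat|]; lra). lra.
     + subst c1. assert (0 < c2) by (simpl in Hc; nra).
       assert (0 < c2 * g2r r * f1 (S r)) by (apply Rmult_lt_0_compat; [apply Rmult_lt_0_compat|]; lra). lra. }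
   destruct (Rtotal_order s 1) as [Hl|[He|Hg]]; auto; [|lra].
   pose proof (Hint ltac:(lra)). exfalso.
   pose proof (Hf1p s ltac:(lra)); pose proof (Hf2p s ltac:(lra)). unfold pi in *.
   destruct (Rle_lt_or_eq_dec c1 0 h1) as [h1'|h1'].
   + assert (0 <= c2 * a2 O * f1 s) by (apply Rmult_le_pos; [apply Rmult_le_pos|]; lra).
     assert (0 < - c1 * a1 O * f2 s) by (apply Rmult_lt_0_compat; [apply Rmult_lt_0_compat|]; lra). lra.
   + subst c1. assert (0 < c2) by (simpl in Hc; nra).
     assert (0 < c2 * a2 O * f1 s) by (apply Rmult_lt_0_compat; [apply Rmult_lt_0_compat|]; lra). lra.
 - intros [h1 h2].
   assert (s < 1).
   { apply Hneg. refine (ev_mono _ _ _ Hgev). intros r [k1 [k2 [k3 k4]]]. unfold P.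
     destruct (Rle_lt_or_eq_dec c2 0 h2) as [h2'|h2'].
     + assert (0 <= c1 * g1r r * f2 (S r)) by (apply Rmult_le_pos; [apply Rmult_le_pos|]; lra).
       assert (0 < - c2 * g2r r * f1 (S r)) by (apply Rmult_lt_0_compat; [apply Rmult_lt_0_compat|]; lra). lra.
     + subst c2. assert (0 < c1) by (simpl in Hc; nra).
       assert (0 < c1 * g1r r * f2 (S r)) by (apply Rmult_lt_0_compat; [apply Rmult_lt_0_compat|]; lra). lra. }
   destruct (Rtotal_order s 0) as [Hl|[He|Hg]]; auto; [lra|].
   pose proof (Hint ltac:(lra)). exfalso.
   pose proof (Hf1p s ltac:(lra)); pose proof (Hf2p s ltac:(lra)). unfold pi in *.
   destruct (Rle_lt_or_eq_dec c2 0 h2) as [h2'|h2'].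
   + assert (0 <= c1 * a1 O * f2 s) by (apply Rmult_le_pos; [apply Rmult_le_pos|]; lra).
     assert (0 < - c2 * a2 O * f1 s) by (apply Rmult_lt_0_compat; [apply Rmult_lt_0_compat|]; lra). lra.
   + subst c2. assert (0 < c1) by (simpl in Hc; nra).
     assert (0 < c1 * a1 O * f2 s) by (apply Rmult_lt_0_compat; [apply Rmult_lt_0_compat|]; lra). lra.
 - intros [h1 h2] sstar Hss Hrat.
   destruct (Rtotal_order s 0) as [Hl|[He|Hg]]; [lra| |].
   + exfalso. assert (0 < pi).
     { unfold pi. rewrite He, Hf10. assert (0 < - c1 * a1 O * f2 0) by (apply Rmult_lt_0_compat; [apply Rmult_lt_0_compat|]; lra). lra. }
     pose proof (Hpip H). lra.
   + destruct (Rtotal_order s 1) as [Hl|[He|Hg2']]; [|exfalso|lra].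
     * apply Hratio; auto; lra.
     * assert (pi < 0).
       { unfold pi. rewrite He, Hf21. assert (0 < - c2 * a2 O * f1 1) by (apply Rmult_lt_0_compat; [apply Rmult_lt_0_compat|]; lra). lra. }
       pose proof (Hpin H). lra.
 - intros [h1 h2] sstar Hss Hrat.
   destruct (Rtotal_order s 0) as [Hl|[He|Hg]]; [lra|auto|].
   destruct (Rtotal_order s 1) as [Hl|[He|Hg2']]; [|auto|lra].
   right; right. apply Hratio; auto; lra.
Qed.
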